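(* Let $f_{s_1d}, f_{s_1r}, f_{rd}, g_{rd}^{s_1}, g_{s_1d}^{r}\in[0,1]$ satisfy $0\le g_{s_1d}^{r}\le f_{s_1d}$ and $0\le g_{rd}^{s_1}< f_{rd}$. Set $T_1=(1-f_{s_1d})f_{s_1r}$ and assume $T_1>0$. For $x\in[0,1]$ define $$\mu_1(x)=(1-x)(f_{s_1d}+T_1)+x\,g_{s_1d}^{r},$$ $$\mu_{u_1}^{\mathrm{SBC}}(x)=\frac{f_{rd}}{(1-x)T_1+f_{rd}-x\,g_{rd}^{s_1}}\,\mu_1(x),\qquad \mu_{u_1}^{\mathrm{DBC}}(x)=\frac{x\,f_{rd}}{(1-x)T_1+x f_{rd}-x\,g_{rd}^{s_1}}\,\mu_1(x).$$ Suppose $$f_{rd}-g_{rd}^{s_1}\le \min\left\{\frac{g_{s_1d}^{r}(T_1+f_{rd})}{T_1+f_{s_1d}},\ \frac{(T_1+g_{rd}^{s_1})^2(f_{s_1d}+T_1)}{T_1(f_{s_1d}+T_1-g_{s_1d}^{r})}-(T_1+2g_{rd}^{s_1})\right\}.$$ Then $$\max_{0\le \beta\le 1}\min\{\mu_1(\beta),\mu_{u_1}^{\mathrm{SBC}}(\beta)\}=\max_{0\le \alpha\le 1}\min\{\mu_1(\alpha),\mu_{u_1}^{\mathrm{DBC}}(\alpha)\}=\Big(1-\frac{T_1}{T_1+g_{rd}^{s_1}}\Big)(f_{s_1d}+T_1)+\frac{T_1}{T_1+g_{rd}^{s_1}}\,g_{s_1d}^{r}.$$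
   Context: This is the single-source case ($w_1=1$) of a cooperative relaying system with source $s_1$, relay $r$, destination $d$. Here $f_{mn}$ is the probability that link $(m,n)$ is not in outage (for Rayleigh fading, $f_{mn}=\exp(-(2^R-1)/(P\rho_{m,n}^2))$), and $g_{mn}^{I}$ is the probability that link $(m,n)$ is not in outage when node $I$ transmits simultaneously (so $g_{mn}^I\le f_{mn}$). The quantity $\min\{\mu_1,\mu_{u_1}^{\mathrm{SBC}}\}$ (resp. $\min\{\mu_1,\mu_{u_1}^{\mathrm{DBC}}\}$) is the maximal stable throughput of $s_1$ under the sensing-based (resp. decision-based) cooperative scheme as a function of the relay's interference probability $\beta$ (resp. $\alpha$); the theorem states the two schemes attain the same optimal maximal stable throughput under the displayed condition. *)

(* Defs.v *)
From Stdlib Require Import Reals.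
Open Scope R_scope.

Definition T1 (fsd fsr : R) : R := (1 - fsd) * fsr.

Definition mu1 (fsd fsr gsd : R) (x : R) : R :=
  (1 - x) * (fsd + T1 fsd fsr) + x * gsd.

Definition muSBC (fsd fsr frd grd gsd : R) (x : R) : R :=
  frd / ((1 - x) * T1 fsd fsr + frd - x * grd) * mu1 fsd fsr gsd x.

Definition muDBC (fsd fsr frd grd gsd : R) (x : R) : R :=
  (x * frd) / ((1 - x) * T1 fsd fsr + x * frd - x * grd) * mu1 fsd fsr gsd x.

Definition is_max_on01 (F : R -> R) (v : R) : Prop :=
  (exists x, 0 <= x <= 1 /\ F x = v) /\ (forall x, 0 <= x <= 1 -> F x <= v).

(* Main.v *)
Require Import Defs.
From Stdlib Require Import Reals Lra Psatz.
Open Scope R_scope.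

Lemma div_le_aux (a D v : R) : 0 < D -> a <= v * D -> a / D <= v.
Proof.
  intros HD H.
  replace v with (v * D / D) by (field; lra).
  unfold Rdiv. apply Rmult_le_compat_r; [left; apply Rinv_0_lt_compat; lra | lra].
Qed.

Theorem theorem1 (fsd fsr frd grd gsd : R)
  (Hfsd : 0 <= fsd <= 1) (Hfsr : 0 <= fsr <= 1) (Hfrd : 0 <= frd <= 1)
  (Hgrd : 0 <= grd <= 1) (Hgsd : 0 <= gsd <= 1)
  (Hgsd_le : 0 <= gsd <= fsd) (Hgrd_lt : 0 <= grd < frd)
  (HT : 0 < T1 fsd fsr)
  (Hcond : frd - grd <=
     Rmin (gsd * (T1 fsd fsr + frd) / (T1 fsd fsr + fsd))
          ((T1 fsd fsr + grd) ^ 2 * (fsd + T1 fsd fsr)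
             / (T1 fsd fsr * (fsd + T1 fsd fsr - gsd))
           - (T1 fsd fsr + 2 * grd))) :
  let v := (1 - T1 fsd fsr / (T1 fsd fsr + grd)) * (fsd + T1 fsd fsr)
           + T1 fsd fsr / (T1 fsd fsr + grd) * gsd in
  is_max_on01 (fun b => Rmin (mu1 fsd fsr gsd b) (muSBC fsd fsr frd grd gsd b)) v /\
  is_max_on01 (fun a => Rmin (mu1 fsd fsr gsd a) (muDBC fsd fsr frd grd gsd a)) v.
Proof.
  intros v. unfold is_max_on01, v, muSBC, muDBC, mu1.
  set (T := T1 fsd fsr) in *. clearbody T.
  assert (Hs : 0 < T + grd) by lra.
  assert (Hc : 0 < fsd + T - gsd) by lra.
  assert (H1 : (frd - grd) * (T + fsd) <= gsd * (T + frd)).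
  { pose proof (Rle_trans _ _ _ Hcond (Rmin_l _ _)) as H.
    pose proof (Rmult_le_compat_r (T + fsd) _ _ ltac:(lra) H) as H'.
    replace (gsd * (T + frd) / (T + fsd) * (T + fsd)) with (gsd * (T + frd)) in H'
      by (field; lra). exact H'. }
  assert (H2 : T * (fsd + T - gsd) * (frd + T + grd) <= (T + grd) ^ 2 * (fsd + T)).
  { pose proof (Rle_trans _ _ _ Hcond (Rmin_r _ _)) as H.
    assert (H0 : frd + T + grd <= (T + grd) ^ 2 * (fsd + T) / (T * (fsd + T - gsd))) by lra.
    pose proof (Rmult_le_compat_l (T * (fsd + T - gsd)) _ _ ltac:(nra) H0) as H'.
    replace (T * (fsd + T - gsd) * ((T + grd) ^ 2 * (fsd + T) / (T * (fsd + T - gsd))))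
      with ((T + grd) ^ 2 * (fsd + T)) in H' by (field; lra). exact H'. }
  set (xs := T / (T + grd)).
  assert (Hxs : xs * (T + grd) = T) by (unfold xs; field; lra).
  assert (Hxs0 : 0 < xs) by (unfold xs; apply Rdiv_lt_0_compat; lra).
  assert (Hxs1 : xs <= 1) by nra.
  set (m := fun x => (1 - x) * (fsd + T) + x * gsd).
  change ((1 - xs) * (fsd + T) + xs * gsd) with (m xs).
  change (fun b => Rmin ((1 - b) * (fsd + T) + b * gsd) (frd / ((1 - b) * T + frd - b * grd) * ((1 - b) * (fsd + T) + b * gsd)))
    with (fun b => Rmin (m b) (frd / ((1 - b) * T + frd - b * grd) * m b)).
  change (fun b => Rmin ((1 - b) * (fsd + T) + b * gsd) (b * frd / ((1 - b) * T + b * frd - b * grd) * ((1 - b) * (fsd + T) + b * gsd)))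
    with (fun b => Rmin (m b) (b * frd / ((1 - b) * T + b * frd - b * grd) * m b)).
  assert (Hmdec : forall x, xs <= x -> m x <= m xs).
  { intros x Hx. unfold m.
    assert (0 <= (x - xs) * (fsd + T - gsd)) by (apply Rmult_le_pos; lra). nra. }
  split; split.
  - exists xs. split; [lra|]. cbv beta.
    replace ((1 - xs) * (fsd + T) + xs * gsd) with (m xs) by reflexivity.
    assert (E : (1 - xs) * T + frd - xs * grd = frd) by (unfold xs; field; lra).
    rewrite E. replace (frd / frd * m xs) with (m xs) by (field; lra).
    apply Rmin_left; lra.
  - intros x Hx. cbv beta.
    replace ((1 - x) * (fsd + T) + x * gsd) with (m x) by reflexivity.
    destruct (Rle_dec x xs) as [Hle|Hgt].
    + eapply Rle_trans; [apply Rmin_r|].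
      assert (HD : 0 < (1 - x) * T + frd - x * grd).
      { assert (0 <= (1 - x) * T) by (apply Rmult_le_pos; lra).
        assert (x * grd <= grd) by nra. lra. }
      replace (frd / ((1 - x) * T + frd - x * grd) * m x)
        with ((frd * m x) / ((1 - x) * T + frd - x * grd)) by (field; lra).
      apply div_le_aux; [exact HD|].
      assert (E : (T + grd) * (m xs * ((1 - x) * T + frd - x * grd) - frd * m x)
                  = (T - x * (T + grd)) * ((fsd + T) * (T + grd) - (fsd + T - gsd) * (T + frd)))
        by (unfold m, xs; field; lra).
      assert (P : 0 <= (T + grd) * (m xs * ((1 - x) * T + frd - x * grd) - frd * m x)).
      { rewrite E. apply Rmult_le_pos; nra. }
      nra.
    + eapply Rle_trans; [apply Rmin_l|]. apply Hmdec; lra.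
  - exists xs. split; [lra|]. cbv beta.
    replace ((1 - xs) * (fsd + T) + xs * gsd) with (m xs) by reflexivity.
    assert (E : (1 - xs) * T + xs * frd - xs * grd = xs * frd) by (unfold xs; field; lra).
    rewrite E. replace (xs * frd / (xs * frd) * m xs) with (m xs) by (field; lra).
    apply Rmin_left; lra.
  - intros x Hx. cbv beta.
    replace ((1 - x) * (fsd + T) + x * gsd) with (m x) by reflexivity.
    destruct (Rle_dec x xs) as [Hle|Hgt].
    + eapply Rle_trans; [apply Rmin_r|].
      assert (HD : 0 < (1 - x) * T + x * frd - x * grd).
      { destruct (Rle_dec (frd - grd) T).
        - assert (x * (T - (frd - grd)) <= T - (frd - grd)) by nra. nra.
        - assert (0 <= x * (frd - grd - T)) by (apply Rmult_le_pos; lra). nra. }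
      replace (x * frd / ((1 - x) * T + x * frd - x * grd) * m x)
        with ((x * frd * m x) / ((1 - x) * T + x * frd - x * grd)) by (field; lra).
      apply div_le_aux; [exact HD|].
      assert (E : (T + grd) ^ 2 * (m xs * ((1 - x) * T + x * frd - x * grd) - x * frd * m x)
                  = frd * (fsd + T - gsd) * ((T + grd) * x - T) ^ 2
                    + ((fsd + T) * (T + grd) ^ 2 - T * (fsd + T - gsd) * (frd + T + grd))
                      * (T - (T + grd) * x))
        by (unfold m, xs; field; lra).
      assert (P : 0 <= (T + grd) ^ 2 * (m xs * ((1 - x) * T + x * frd - x * grd) - x * frd * m x)).
      { rewrite E. apply Rplus_le_le_0_compat.
        - apply Rmult_le_pos; [nra| apply pow2_ge_0].
        - apply Rmult_le_pos; nra. }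
      assert (0 < (T + grd) ^ 2) by nra.
      nra.
    + eapply Rle_trans; [apply Rmin_l|]. apply Hmdec; lra.
Qed.
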